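(* For every order $N\in\mathbb N_{\ge3}$ and mode dimensions $D_1,\dots,D_N\in\mathbb N_{\ge2}$, there exist a ground truth $\mathcal W^*\in\mathbb R^{D_1\times\cdots\times D_N}$ and a set of observed entries $\Omega\subset[D_1]\times\cdots\times[D_N]$, defining the loss $\mathcal L(\mathcal W)=\frac1{|\Omega|}\sum_{(d_1,\dots,d_N)\in\Omega}(\mathcal W_{d_1,\dots,d_N}-\mathcal W^*_{d_1,\dots,d_N})^2$, such that for every mode tree $\mathcal T$ over $[N]$ the set $$\mathcal R_{\mathcal T}:=\big\{(\mathrm{rank}\,[\![\mathcal W;\nu]\!])_{\nu\in\mathcal T\setminus\{[N]\}}:\ \mathcal W\in\mathbb R^{D_1\times\cdots\times D_N},\ \mathcal L(\mathcal W)=0\big\}$$ contains elements $(R_\nu)_\nu$ and $(R'_\nu)_\nu$ such that: (i) there is no $(R''_\nu)_\nu\in\mathcal R_{\mathcal T}\setminus\{(R_\nu)_\nu,(R'_\nu)_\nu\}$ with $(R''_\nu)_\nu\le(R_\nu)_\nu$ or $(R''_\nu)_\nu\le(R'_\nu)_\nu$; and (ii) neither $(R_\nu)_\nu\le(R'_\nu)_\nu$ nor $(R'_\nu)_\nu\le(R_\nu)_\nu$. Here $\le$ is the entrywise (product) partial order on tuples indexed by $\mathcal T\setminus\{[N]\}$.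
   Context: $[K]:=\{1,\dots,K\}$. A mode tree $\mathcal T$ over $[N]$ is a rooted tree whose nodes are labeled by subsets of $[N]$, with exactly $N$ leaves labeled $\{1\},\dots,\{N\}$, and where each interior node's label is the union of its children's labels; nodes are identified with their labels (so $\mathcal T\subset 2^{[N]}$) and the root is $[N]$. The matricization $[\![\mathcal W;I]\!]$ of $\mathcal W\in\mathbb R^{D_1\times\cdots\times D_N}$ w.r.t. $I\subset[N]$ is its arrangement as a $\prod_{i\in I}D_i\times\prod_{j\notin I}D_j$ matrix whose rows are indexed by the modes in $I$ and columns by the remaining modes (entry $\mathcal W_{d_1,\dots,d_N}$ goes to row $1+\sum_l(d_{i_l}-1)\prod_{l'<l}D_{i_{l'}}$ and column $1+\sum_l(d_{j_l}-1)\prod_{l'<l}D_{j_{l'}}$, where $I=\{i_1<\cdots\}$, $[N]\setminus I=\{j_1<\cdots\}$). The tuple $(\mathrm{rank}\,[\![\mathcal W;\nu]\!])_{\nu\in\mathcal T\setminus\{[N]\}}$ is the hierarchical tensor rank of $\mathcal W$ w.r.t. $\mathcal T$. *)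

(* Defs.v *)
From HB Require Import structures.
From mathcomp Require Import all_boot all_order all_algebra.
From mathcomp Require Import Rstruct.
From Stdlib Require Rdefinitions.
Notation R := Rdefinitions.R.
Set Implicit Arguments. Unset Strict Implicit. Unset Printing Implicit Defensive.
Import Order.TTheory GRing.Theory Num.Theory.
Local Open Scope ring_scope.

(* Multi-indices (d_1,...,d_N) in [D_1] x ... x [D_N]; modes are 'I_N (0-based). *)
Definition idx (N : nat) (D : 'I_N -> nat) := {dffun forall i : 'I_N, 'I_(D i)}.

Definition tensor (N : nat) (D : 'I_N -> nat) := idx D -> R.

Definition rowidx N (D : 'I_N -> nat) (nu : {set 'I_N}) :=
  {dffun forall i : {i : 'I_N | i \in nu}, 'I_(D (val i))}.
Definition colidx N (D : 'I_N -> nat) (nu : {set 'I_N}) :=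
  {dffun forall i : {i : 'I_N | i \notin nu}, 'I_(D (val i))}.

Definition merge N (D : 'I_N -> nat) (nu : {set 'I_N})
  (r : rowidx D nu) (c : colidx D nu) : idx D :=
  [ffun i => (if i \in nu as b return ((i \in nu) = b -> 'I_(D i))
              then fun h => r (exist _ i h)
              else fun h => c (exist _ i (negbT h))) (erefl (i \in nu))].

(* The matricization [[W; nu]]: rows indexed by the modes in nu, columns by the
   remaining modes (rows/columns are listed in the enumeration order of the
   finite index types; this only permutes rows/columns w.r.t. the paper's
   ordering, so the rank is the same). *)
Definition matricization N (D : 'I_N -> nat) (W : tensor D) (nu : {set 'I_N}) :
  'M[R]_(#|{: rowidx D nu}|, #|{: colidx D nu}|) :=
  \matrix_(a, b) W (merge (enum_val a) (enum_val b)).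

Definition mrank N (D : 'I_N -> nat) (W : tensor D) (nu : {set 'I_N}) : nat :=
  \rank (matricization W nu).

Definition loss N (D : 'I_N -> nat) (Wstar : tensor D) (Omega : {set idx D})
  (W : tensor D) : R :=
  (#|Omega|%:R)^-1 * \sum_(d in Omega) (W d - Wstar d) ^+ 2.

(* Mode trees over [N]: a rooted tree whose nodes are identified with their
   labels (so the node set is a set T of subsets of [N]), given by a parent map
   par. *)
Definition children N (T : {set {set 'I_N}}) (par : {set 'I_N} -> {set 'I_N})
  (nu : {set 'I_N}) : {set {set 'I_N}} :=
  [set mu in T | (mu != setT) && (par mu == nu)].

Definition is_mode_tree N (T : {set {set 'I_N}}) (par : {set 'I_N} -> {set 'I_N}) : Prop :=
  [/\ setT \in T,
      (forall nu, nu \in T -> nu != setT -> par nu \in T) /\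
      (forall nu, nu \in T -> exists k, iter k par nu = setT),
      (forall nu, nu \in T -> (children T par nu == set0) = (#|nu| == 1%N)),
      (forall i : 'I_N, [set i] \in T) &
      (forall nu, nu \in T -> children T par nu != set0 ->
          nu = \bigcup_(mu in children T par nu) mu)].

Definition node N (T : {set {set 'I_N}}) := {nu : {set 'I_N} | nu \in T :\ setT}.

Definition htrank N (D : 'I_N -> nat) (T : {set {set 'I_N}}) (W : tensor D) :
  {ffun node T -> nat} := [ffun nu => mrank W (val nu)].

Definition in_RT N (D : 'I_N -> nat) (Wstar : tensor D) (Omega : {set idx D})
  (T : {set {set 'I_N}}) (t : {ffun node T -> nat}) : Prop :=
  exists W : tensor D, loss Wstar Omega W = 0 /\ htrank T W = t.

Definition tle N (T : {set {set 'I_N}}) (t t' : {ffun node T -> nat}) : Prop :=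
  forall nu, (t nu <= t' nu)%N.

(* Main.v *)
Require Import Defs.
From HB Require Import structures.
From mathcomp Require Import all_boot all_order all_algebra.
From mathcomp Require Import Rstruct.
From mathcomp Require Import ring.
Set Implicit Arguments. Unset Strict Implicit. Unset Printing Implicit Defensive.
Import Order.TTheory GRing.Theory Num.Theory.
Local Open Scope ring_scope.

Section Mat.
Variables (N : nat) (D : 'I_N -> nat) (nu : {set 'I_N}).

Definition rowpart (d : idx D) : rowidx D nu := [ffun j => d (val j)].
Definition colpart (d : idx D) : colidx D nu := [ffun j => d (val j)].
Definition mix (p q : idx D) : idx D := [ffun i => if i \in nu then p i else q i].

Lemma merge_in (r : rowidx D nu) (c : colidx D nu) i (h : i \in nu) :
  Defs.merge r c i = r (exist _ i h).
Proof.
rewrite /merge ffunE.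
move: (erefl (i \in nu)).
case: {2 3}(i \in nu) => e.
  by rewrite (bool_irrelevance e h).
by exfalso; rewrite h in e.
Qed.

Lemma merge_out (r : rowidx D nu) (c : colidx D nu) i (h : i \notin nu) :
  Defs.merge r c i = c (exist _ i h).
Proof.
rewrite /merge ffunE.
move: (erefl (i \in nu)).
case: {2 3}(i \in nu) => e.
  by exfalso; rewrite e in h.
by rewrite (bool_irrelevance (negbT e) h).
Qed.

Lemma merge_mix p q : Defs.merge (rowpart p) (colpart q) = mix p q.
Proof.
apply/ffunP => i; rewrite [RHS]ffunE.
case: (boolP (i \in nu)) => h.
  by rewrite merge_in ffunE.
by rewrite merge_out ffunE.
Qed.

Lemma mat_entry (W : tensor D) r c :
  matricization W nu (enum_rank r) (enum_rank c) = W (Defs.merge r c).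
Proof. by rewrite mxE !enum_rankK. Qed.

End Mat.

Lemma minor_aux m n k (C : 'M[R]_(m, k)) (B : 'M[R]_(k, n)) : (k <= 1)%N ->
  forall i1 i2 j1 j2, (C *m B) i1 j1 * (C *m B) i2 j2 = (C *m B) i1 j2 * (C *m B) i2 j1.
Proof.
case: k C B => [|[|//]] C B _ i1 i2 j1 j2; rewrite !mxE.
  by rewrite !big_ord0 !mul0r.
rewrite !big_ord1; ring.
Qed.

Lemma rank1_minor m n (A : 'M[R]_(m, n)) : (\rank A <= 1)%N ->
  forall i1 i2 j1 j2, A i1 j1 * A i2 j2 = A i1 j2 * A i2 j1.
Proof. by move=> h; rewrite -(mulmx_base A); apply: minor_aux. Qed.

Lemma rank_sum m n K (A : 'M[R]_(m, n)) (a : 'I_K -> 'I_m -> R) (b : 'I_K -> 'I_n -> R) :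
  (forall i j, A i j = \sum_k a k i * b k j) -> (\rank A <= K)%N.
Proof.
move=> h.
have -> : A = (\matrix_(i, k) a k i) *m (\matrix_(k, j) b k j).
  by apply/matrixP => i j; rewrite h !mxE; apply: eq_bigr => k _; rewrite !mxE.
exact: leq_trans (mxrankM_maxl _ _) (rank_leq_col _).
Qed.

Section Main.
Variables (N : nat) (D : 'I_N -> nat) (hN : (2 < N)%N) (hD : forall i, (1 < D i)%N).

Definition o0 : 'I_N := Ordinal (ltnW (ltnW hN)).
Definition o1 : 'I_N := Ordinal (ltnW hN).
Definition o2 : 'I_N := Ordinal hN.

Definition ind (S : {set 'I_N}) : idx D :=
  [ffun i => if i \in S then Ordinal (hD i) else Ordinal (ltnW (hD i))].

Lemma ind_val S i : (ind S i : nat) = (i \in S).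
Proof. by rewrite ffunE; case: (i \in S). Qed.

Lemma mix_ind nu S S' : mix nu (ind S) (ind S') = ind ((S :&: nu) :|: (S' :\: nu)).
Proof.
apply/ffunP => i; rewrite !ffunE !inE.
by case: (i \in nu); rewrite /= ?andbT ?andbF ?orbF.
Qed.

Lemma minor_mix (W : tensor D) nu p p' q q' : (mrank W nu <= 1)%N ->
  W (mix nu p q) * W (mix nu p' q') = W (mix nu p q') * W (mix nu p' q).
Proof.
move=> h; have := rank1_minor h (enum_rank (rowpart nu p)) (enum_rank (rowpart nu p'))
  (enum_rank (colpart nu q)) (enum_rank (colpart nu q')).
by rewrite !mat_entry !merge_mix.
Qed.

Lemma LB1 (W : tensor D) nu : W (ind set0) = 1 -> (0 < mrank W nu)%N.
Proof.
move=> h; rewrite lt0n mxrank_eq0; apply/eqP => /matrixP /(_ (enum_rank (rowpart nu (ind set0))) (enum_rank (colpart nu (ind set0)))).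
rewrite mat_entry merge_mix mxE.
have -> : mix nu (ind set0) (ind set0) = ind set0 by apply/ffunP => i; rewrite ffunE if_same.
by rewrite h => /eqP; rewrite oner_eq0.
Qed.

Lemma LB2 (W : tensor D) (nu : {set 'I_N}) (j : 'I_N) : j != o2 -> (j \in nu) != (o2 \in nu) ->
  W (ind set0) = 1 -> W (ind [set o2]) = 0 -> W (ind [set j; o2]) != 0 ->
  (1 < mrank W nu)%N.
Proof.
move=> jo sep h0 h2 hj; rewrite ltnNge; apply/negP => /minor_mix h.
have := h (ind set0) (ind [set j; o2]) (ind set0) (ind [set j; o2]).
rewrite !mix_ind set0I set0D !setU0 set0U setID h0 mul1r.
have setE : forall A : {set 'I_N}, (forall i, (i \in A) = (((i == j) && (j \in A)) || ((i == o2) && (o2 \in A)))) ->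
   ~~ (j \in A) -> (o2 \in A) -> A = [set o2].
  move=> A HA nj yo; apply/setP => i; rewrite HA !inE.
  case: (eqVneq i j) => [->|]; rewrite ?(negbTE nj) ?(negbTE jo) //=.
  by case: (eqVneq i o2) => [->|]; rewrite ?yo.
have setE' : forall A : {set 'I_N}, (forall i, (i \in A) = (((i == j) && (j \in A)) || ((i == o2) && (o2 \in A)))) ->
   (j \in A) -> ~~(o2 \in A) -> A = [set j].
  move=> A HA nj yo; apply/setP => i; rewrite HA !inE.
  case: (eqVneq i j) => [->|]; rewrite ?nj //=.
  by case: (eqVneq i o2) => [->|]; rewrite ?(negbTE yo).
have memD : forall (A : {set 'I_N}) i, (i \in [set j; o2] :\: A) = (((i == j) && (j \in [set j; o2] :\: A)) || ((i == o2) && (o2 \in [set j; o2] :\: A))).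
  move=> A i; case: (eqVneq i j) => [->|]; first by rewrite /= (negbTE jo) /= ?orbF.
  case: (eqVneq i o2) => [->|]; first by rewrite eq_sym (negbTE jo).
  by rewrite !inE => /negbTE -> /negbTE ->; rewrite andbF.
have memI : forall (A : {set 'I_N}) i, (i \in [set j; o2] :&: A) = (((i == j) && (j \in [set j; o2] :&: A)) || ((i == o2) && (o2 \in [set j; o2] :&: A))).
  move=> A i; case: (eqVneq i j) => [->|]; first by rewrite /= (negbTE jo) /= ?orbF.
  case: (eqVneq i o2) => [->|]; first by rewrite eq_sym (negbTE jo).
  by rewrite !inE => /negbTE -> /negbTE ->.
move: sep; case: (boolP (j \in nu)) => hjn; case: (boolP (o2 \in nu)) => hon //= _.
- rewrite (setE ([set j; o2] :\: nu) (memD nu)); last 2 first.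
  + by rewrite !inE hjn.
  + by rewrite !inE hon eqxx orbT.
  by rewrite h2 mul0r => /eqP; rewrite (negbTE hj).
- rewrite (setE ([set j; o2] :&: nu) (memI nu)); last 2 first.
  + by rewrite !inE (negbTE hjn) andbF.
  + by rewrite !inE hon eqxx orbT.
  by rewrite h2 mulr0 => /eqP; rewrite (negbTE hj).
Qed.

Lemma derived (W : tensor D) (m j : 'I_N) : m != j -> m != o2 -> j != o2 ->
  (mrank W [set m] <= 1)%N -> W (ind set0) = 1 ->
  W (ind [set m; j; o2]) = 1 -> W (ind [set j; o2]) != 0.
Proof.
move=> mj mo jo h h0 h1.
have := minor_mix (ind set0) (ind [set m]) (ind [set j; o2]) (ind set0) h.
rewrite !mix_ind set0I set0D !setU0 set0U setIid.
have -> : [set j; o2] :\: [set m] = [set j; o2].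
  apply/setP => i; rewrite !inE; case: (eqVneq i m) => [->|_]; last by [].
  by rewrite (negbTE mj) (negbTE mo).
have -> : [set m] :|: [set j; o2] = [set m; j; o2] by rewrite setUA.
rewrite h0 h1 mulr1 => e; apply/eqP => e2; move: e; rewrite e2 mul0r => /eqP.
by rewrite eq_sym oner_eq0.
Qed.

Lemma prod_bool (b : 'I_N -> bool) : \prod_i ((b i)%:R : R) = ([forall i, b i])%:R.
Proof.
case: (boolP [forall i, b i]) => [/forallP H | /forallPn [i Hi]].
  by apply: big1 => i _; rewrite H.
by rewrite (bigD1 i) //= (negbTE Hi) mul0r.
Qed.

Definition gb (m j : 'I_N) (k : nat) (i : 'I_N) (x : nat) : bool :=
  if i == m then true else if (i == j) || (i == o2) then x == k else x == 0%N.

Definition Wt (m j : 'I_N) : tensor D :=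
  fun d => \sum_(k < 2) \prod_i ((gb m j k i (d i))%:R : R).

Lemma Wt_eval m j d : Wt m j d = ([forall i, gb m j 0 i (d i)])%:R + ([forall i, gb m j 1 i (d i)])%:R.
Proof. by rewrite /Wt big_ord_recl big_ord1 /= !prod_bool. Qed.

Definition goodmj (m j : 'I_N) := ((m == o0) && (j == o1)) || ((m == o1) && (j == o0)).

Lemma E1 m j : goodmj m j -> Wt m j (ind set0) = 1.
Proof.
move=> h; rewrite Wt_eval.
have -> : [forall i, gb m j 0 i (ind set0 i)].
  by apply/forallP => i; rewrite ind_val inE /gb; case: ifP => //; case: ifP.
have -> : [forall i, gb m j 1 i (ind set0 i)] = false.
  apply/negbTE/forallPn; exists o2; rewrite ind_val inE /gb.
  by case/orP: h => /andP [/eqP -> /eqP ->].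
by rewrite addr0.
Qed.

Lemma E2 m j : goodmj m j -> Wt m j (ind [set o0; o1; o2]) = 1.
Proof.
move=> h; rewrite Wt_eval.
have -> : [forall i, gb m j 0 i (ind [set o0; o1; o2] i)] = false.
  apply/negbTE/forallPn; exists o2; rewrite ind_val !inE /gb.
  by case/orP: h => /andP [/eqP -> /eqP ->].
have -> : [forall i, gb m j 1 i (ind [set o0; o1; o2] i)].
  apply/forallP => i; rewrite ind_val !inE /gb.
  case/orP: h => /andP [/eqP -> /eqP ->]; rewrite -!val_eqE /=;
  by case: i => [[|[|[|n]]] hi].
by rewrite add0r.
Qed.

Lemma E3 m j : goodmj m j -> Wt m j (ind [set o2]) = 0.
Proof.
move=> h; rewrite Wt_eval.
have -> : [forall i, gb m j 0 i (ind [set o2] i)] = false.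
  apply/negbTE/forallPn; exists o2; rewrite ind_val !inE /gb.
  by case/orP: h => /andP [/eqP -> /eqP ->].
have -> : [forall i, gb m j 1 i (ind [set o2] i)] = false.
  apply/negbTE/forallPn; exists j; rewrite ind_val !inE /gb.
  by case/orP: h => /andP [/eqP -> /eqP ->].
by rewrite addr0.
Qed.

Lemma fact_split (nu : {set 'I_N}) (F : 'I_N -> nat -> R) (r r0 : rowidx D nu) (c c0 : colidx D nu) :
  \prod_i F i (Defs.merge r c i) =
  (\prod_(i in nu) F i (Defs.merge r c0 i)) * (\prod_(i | i \notin nu) F i (Defs.merge r0 c i)).
Proof.
rewrite (bigID (fun i => i \in nu)) /=; congr (_ * _); apply: eq_bigr => i hi.
  by rewrite !(merge_in _ _ hi).
by rewrite !(merge_out _ _ hi).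
Qed.

Definition aa m j (nu : {set 'I_N}) (k : nat) (r : rowidx D nu) : R :=
  \prod_(i in nu) (gb m j k i (Defs.merge r (colpart nu (ind set0)) i))%:R.
Definition bb m j (nu : {set 'I_N}) (k : nat) (c : colidx D nu) : R :=
  \prod_(i | i \notin nu) (gb m j k i (Defs.merge (rowpart nu (ind set0)) c i))%:R.

Lemma Wt_entry m j (nu : {set 'I_N}) a b :
  matricization (Wt m j) nu a b = \sum_(k < 2) aa m j k (enum_val a) * bb m j k (enum_val b).
Proof.
rewrite mxE /Wt; apply: eq_bigr => k _.
exact: (@fact_split nu (fun i x => (gb m j k i x)%:R) _ _ _ _).
Qed.

Lemma UB2 m j (nu : {set 'I_N}) : (mrank (Wt m j) nu <= 2)%N.
Proof.
apply: (rank_sum (a := fun k r => aa m j k (enum_val r)) (b := fun k c => bb m j k (enum_val c))).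
exact: Wt_entry.
Qed.

Lemma gb_indep m j k i x : i != j -> i != o2 -> gb m j k i x = gb m j 0 i x.
Proof. by move=> h1 h2; rewrite /gb (negbTE h1) (negbTE h2). Qed.

Lemma UB1 m j (nu : {set 'I_N}) : (j \in nu) = (o2 \in nu) -> (mrank (Wt m j) nu <= 1)%N.
Proof.
move=> e; case: (boolP (j \in nu)) => hj.
- have ho : o2 \in nu by rewrite -e.
  apply: (rank_sum (a := fun _ r => \sum_(k < 2) aa m j k (enum_val r)) (b := fun _ c => bb m j 0 (enum_val c))).
  move=> a b; rewrite Wt_entry big_ord1 mulr_suml; apply: eq_bigr => k _; congr (_ * _).
  apply: eq_bigr => i hi; rewrite gb_indep //.
    by apply: contraNneq hi => ->.
  by apply: contraNneq hi => ->.
- have ho : o2 \notin nu by rewrite -e.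
  apply: (rank_sum (a := fun _ r => aa m j 0 (enum_val r)) (b := fun _ c => \sum_(k < 2) bb m j k (enum_val c))).
  move=> a b; rewrite Wt_entry big_ord1 mulr_sumr; apply: eq_bigr => k _; congr (_ * _).
  apply: eq_bigr => i hi; rewrite gb_indep //.
    by apply: contraNneq hj => <-.
  by apply: contraNneq ho => <-.
Qed.

Definition Omega : {set idx D} := [set ind set0; ind [set o0; o1; o2]; ind [set o2]].
Definition Wstar : tensor D := Wt o0 o1.

Lemma good01 : goodmj o0 o1. Proof. by rewrite /goodmj !eqxx. Qed.
Lemma good10 : goodmj o1 o0. Proof. by rewrite /goodmj !eqxx orbT. Qed.

Lemma sol_Wt m j : goodmj m j -> loss Wstar Omega (Wt m j) = 0.
Proof.
move=> h; rewrite /loss big1 ?mulr0 // => d; rewrite !inE => /orP [/orP [/eqP -> | /eqP ->] | /eqP ->].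
- by rewrite /Wstar !E1 ?good01 // subrr expr0n.
- by rewrite /Wstar !E2 ?good01 // subrr expr0n.
- by rewrite /Wstar !E3 ?good01 // subrr expr0n.
Qed.

Lemma sol_vals (W : tensor D) : loss Wstar Omega W = 0 ->
  [/\ W (ind set0) = 1, W (ind [set o0; o1; o2]) = 1 & W (ind [set o2]) = 0].
Proof.
rewrite /loss => /eqP; rewrite mulf_eq0 invr_eq0 pnatr_eq0 => /orP [].
  by move=> /eqP c0; have := card0_eq c0 (ind set0); rewrite !inE eqxx.
move=> /eqP hs.
have H := psumr_eq0P (fun d _ => sqr_ge0 (W d - Wstar d)) hs.
have V : forall d, d \in Omega -> W d = Wstar d.
  by move=> d hd; apply/eqP; rewrite -subr_eq0 -sqrf_eq0; apply/eqP; apply: H.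
rewrite !V ?inE ?eqxx ?orbT //.
by rewrite /Wstar E1 ?E2 ?E3 ?good01.
Qed.

Definition sep (j : 'I_N) (nu : {set 'I_N}) : nat := if (j \in nu) != (o2 \in nu) then 2 else 1.

Lemma good_neq m j : goodmj m j -> [/\ m != j, m != o2, j != o2 & [set m; j; o2] = [set o0; o1; o2]].
Proof.
case/orP => /andP [/eqP -> /eqP ->]; split => //.
apply/setP => i; rewrite !inE; by case: (i == o0); case: (i == o1).
Qed.

Lemma solLB m j (W : tensor D) nu : goodmj m j -> loss Wstar Omega W = 0 ->
  (mrank W [set m] <= 1)%N -> (sep j nu <= mrank W nu)%N.
Proof.
move=> g /sol_vals [h0 h1 h2] hm; have [mj mo jo e] := good_neq g.
rewrite /sep; case: ifP => hs.
  apply: (LB2 jo hs h0 h2).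
  by apply: (derived mj mo jo hm h0); rewrite e.
exact: LB1.
Qed.

Lemma sep_m m j : goodmj m j -> sep j [set m] = 1%N.
Proof.
move=> g; have [mj mo jo _] := good_neq g.
by rewrite /sep !inE (eq_sym j) (negbTE mj) (eq_sym o2) (negbTE mo).
Qed.

Lemma mrank_Wt m j nu : goodmj m j -> mrank (Wt m j) nu = sep j nu.
Proof.
move=> g; have [mj mo jo _] := good_neq g.
have hm : (mrank (Wt m j) [set m] <= 1)%N.
  by apply: UB1; rewrite !inE (eq_sym j) (negbTE mj) (eq_sym o2) (negbTE mo).
apply/eqP; rewrite eqn_leq (solLB nu g (sol_Wt g) hm) andbT.
rewrite /sep; case: ifP => hs; first exact: UB2.
by apply: UB1; move/negbFE/eqP: hs.
Qed.

Definition RT (j : 'I_N) (T : {set {set 'I_N}}) : {ffun node T -> nat} := [ffun nu => sep j (val nu)].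

Lemma main_sec : exists (Ws : tensor D) (Om : {set idx D}),
    forall (T : {set {set 'I_N}}) (par : {set 'I_N} -> {set 'I_N}),
      is_mode_tree T par ->
      exists R1 R2 : {ffun node T -> nat},
        [/\ in_RT Ws Om R1, in_RT Ws Om R2,
            (forall R3, in_RT Ws Om R3 -> R3 <> R1 -> R3 <> R2 ->
               ~ (tle R3 R1 \/ tle R3 R2)),
            ~ tle R1 R2 & ~ tle R2 R1].
Proof.
exists Wstar, Omega => T par [hroot _ _ hsing _].
have nodeS : forall i : 'I_N, i != o2 -> [set i] \in T :\ setT.
  move=> i hi; rewrite !inE hsing andbT; apply/negP => /eqP /setP /(_ o2).
  by rewrite !inE (eq_sym o2) (negbTE hi).
have htr : forall m j, goodmj m j -> htrank T (Wt m j) = RT j T.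
  by move=> m j g; apply/ffunP => nu; rewrite !ffunE mrank_Wt.
have inR : forall m j, goodmj m j -> in_RT Wstar Omega (RT j T).
  by move=> m j g; exists (Wt m j); split; [exact: sol_Wt | exact: htr].
have le_eq : forall m j W, goodmj m j -> loss Wstar Omega W = 0 ->
    tle (htrank T W) (RT j T) -> htrank T W = RT j T.
  move=> m j W g hl H; have [mj mo jo _] := good_neq g.
  have hm := H (exist _ [set m] (nodeS m mo)); rewrite !ffunE /= sep_m // in hm.
  apply/ffunP => nu; have := H nu; rewrite !ffunE => hle.
  by apply/eqP; rewrite eqn_leq hle (solLB _ g hl hm).
exists (RT o1 T), (RT o0 T); split.
- exact: inR good01.
- exact: inR good10.
- move=> R3 [W [hl <-]] n1 n2 [H|H].
    by apply: n1; apply: le_eq good01 hl H.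
  by apply: n2; apply: le_eq good10 hl H.
- move=> H; have := H (exist _ [set o1] (nodeS o1 isT)).
  by rewrite !ffunE /= /sep !inE.
- move=> H; have := H (exist _ [set o0] (nodeS o0 isT)).
  by rewrite !ffunE /= /sep !inE.
Qed.

End Main.

Theorem proposition2 (N : nat) (D : 'I_N -> nat) :
  (3 <= N)%N -> (forall i, (2 <= D i)%N) ->
  exists (Wstar : tensor D) (Omega : {set idx D}),
    forall (T : {set {set 'I_N}}) (par : {set 'I_N} -> {set 'I_N}),
      is_mode_tree T par ->
      exists R1 R2 : {ffun node T -> nat},
        [/\ in_RT Wstar Omega R1, in_RT Wstar Omega R2,
            (forall R3, in_RT Wstar Omega R3 -> R3 <> R1 -> R3 <> R2 ->
               ~ (tle R3 R1 \/ tle R3 R2)),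
            ~ tle R1 R2 & ~ tle R2 R1].
Proof. by move=> hN hD; apply: (main_sec hN hD). Qed.
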